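(* Let $L\subseteq\Sigma^*$ be regular. (1) The map \[\mathrm{LQ}(L)\to\big(\{\mathrm{DR}_L[X]: X\subseteq \mathrm{LW}(L)\},\cup,\emptyset\big),\qquad K\mapsto\{v^{-1}L^r: v\in K^r\},\] is a well-defined isomorphism of semilattices (its codomain being a $\cup$-subsemilattice of $\mathcal{P}(\mathrm{LW}(L^r))$). (2) For all $u,v\in\Sigma^*$: $\mathrm{DR}_L(u^{-1}L,v^{-1}L^r)$ holds iff $u^{-1}L\not\subseteq \mathrm{dr}_L(v^{-1}L^r)$. (3) $\mathrm{dr}_L$ restricts to a bijection from $J(\mathrm{LQ}(L^r))$ onto $M(\mathrm{LQ}(L))$, and for all $j\in J(\mathrm{LQ}(L))$ and $k\in J(\mathrm{LQ}(L^r))$ we have $\mathrm{RDR}_L(j,k)$ iff $j\not\subseteq\mathrm{dr}_L(k)$.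
   Context: $u^{-1}L=\{w:uw\in L\}$, $U^{-1}L=\bigcup_{u\in U}u^{-1}L$; $\mathrm{LW}(L)=\{u^{-1}L:u\in\Sigma^*\}$; $\mathrm{LQ}(L)$ is the set of all finite unions (including $\emptyset$) of members of $\mathrm{LW}(L)$, a finite lattice under inclusion. $w^r$ is the reversal of $w$, $K^r=\{w^r:w\in K\}$, $\overline K=\Sigma^*\setminus K$. The dependency relation $\mathrm{DR}_L\subseteq\mathrm{LW}(L)\times\mathrm{LW}(L^r)$ is defined by $\mathrm{DR}_L(u^{-1}L,v^{-1}L^r)\iff uv^r\in L$ (well-defined), and $\mathrm{DR}_L[X]=\{y:\exists x\in X,\ \mathrm{DR}_L(x,y)\}$. For a finite lattice $S$, $J(S)$ is the set of join-irreducible elements ($j$ such that $j=\bigvee X$, $X$ finite, implies $j\in X$; in particular $j\neq\bot$) and $M(S)$ the set of meet-irreducible elements (dually). The reduced dependency relation is $\mathrm{RDR}_L=\mathrm{DR}_L\cap(J(\mathrm{LQ}(L))\times J(\mathrm{LQ}(L^r)))$. $\mathrm{dr}_L\colon\mathrm{LQ}(L^r)\to\mathrm{LQ}(L)$ is the map $K\mapsto(\overline{K^r})^{-1}L$, which is an order-reversing bijection. *)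

(* Defs.v *)
From Stdlib Require Import List.
From mathcomp Require Import all_boot.
From mathcomp Require Import boolp classical_sets.
Set Implicit Arguments. Unset Strict Implicit. Unset Printing Implicit Defensive.
Local Open Scope classical_set_scope.

Section Lang.
Variable S : finType.
Notation word := (seq S).

Definition regular (L : set word) : Prop :=
  exists (Q : finType) (d : Q -> S -> Q) (q0 : Q) (F : set Q),
    forall w, L w <-> F (foldl d q0 w).

Definition lquot (u : word) (L : set word) : set word := [set w | L (u ++ w)].
Definition lquotS (U : set word) (L : set word) : set word :=
  [set w | exists2 u, U u & L (u ++ w)].
Definition rlang (K : set word) : set word := [set w | K (rev w)].

Definition LW (L : set word) : set (set word) := [set K | exists u, K = lquot u L].
(* LQ(L): finite unions (including the empty one) of members of LW(L) *)
Definition LQ (L : set word) : set (set word) :=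
  [set K | exists s : seq word, K = \bigcup_(u in [set` s]) lquot u L].

Definition DR (L : set word) (x y : set word) : Prop :=
  exists u v, [/\ x = lquot u L, y = lquot v (rlang L) & L (u ++ rev v)].
Definition DRimg (L : set word) (X : set (set word)) : set (set word) :=
  [set y | exists2 x, X x & DR L x y].

Definition phi (L : set word) (K : set word) : set (set word) :=
  [set y | exists2 v, rlang K v & y = lquot v (rlang L)].

Definition dr (L : set word) (K : set word) : set word := lquotS (~` rlang K) L.

End Lang.

Section Lat.
Variable T : Type.
Definition is_lub (P : set (set T)) (X : set (set T)) (j : set T) : Prop :=
  [/\ P j, (forall x, X x -> x `<=` j) &
      (forall z, P z -> (forall x, X x -> x `<=` z) -> j `<=` z)].
Definition is_glb (P : set (set T)) (X : set (set T)) (m : set T) : Prop :=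
  [/\ P m, (forall x, X x -> m `<=` x) &
      (forall z, P z -> (forall x, X x -> z `<=` x) -> z `<=` m)].
Definition JI (P : set (set T)) (j : set T) : Prop :=
  P j /\ forall s : seq (set T), (forall x, List.In x s -> P x) ->
           is_lub P [set x | List.In x s] j -> List.In j s.
Definition MI (P : set (set T)) (m : set T) : Prop :=
  P m /\ forall s : seq (set T), (forall x, List.In x s -> P x) ->
           is_glb P [set x | List.In x s] m -> List.In m s.
End Lat.

Definition RDR (S : finType) (L : set (seq S)) (j k : set (seq S)) : Prop :=
  [/\ DR L j k, JI (LQ L) j & JI (LQ (rlang L)) k].

(* Main.v *)
Require Import Defs.
From mathcomp Require Import all_boot.
From mathcomp Require Import boolp classical_sets.
Local Open Scope classical_set_scope.
Set Implicit Arguments. Unset Strict Implicit.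

Lemma seteqE (T : Type) (A B : set T) : (forall x, A x <-> B x) -> A = B.
Proof. by move=> H; apply/seteqP; split => x; apply H. Qed.

Lemma In_mem (T : eqType) (x : T) (s : seq T) : List.In x s <-> x \in s.
Proof.
elim: s => [|y s IH] //=; rewrite in_cons; split.
- by case=> [->|/IH ->]; rewrite ?eqxx ?orbT.
- by case/orP => [/eqP ->|/IH]; [left|right].
Qed.

Section Main.
Variable S : finType.
Notation word := (seq S).

Lemma lquot_rev (L : set word) v x : lquot v (rlang L) x = L (rev x ++ rev v).
Proof. by rewrite /lquot /rlang /= rev_cat. Qed.

Lemma rlangK (L : set word) : rlang (rlang L) = L.
Proof. by apply: seteqE => x; rewrite /rlang /= revK. Qed.

Definition finq (M : set word) := exists (T : finType) (g : word -> T),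
  forall u u', g u = g u' -> lquot u M = lquot u' M.

Lemma LQ_union (M : set word) : finq M ->
  forall U, LQ M (\bigcup_(u in U) lquot u M).
Proof.
move=> [T [g Hg]] U.
pose h (t : T) : option word :=
  match pselect (exists u, U u /\ g u = t) with
  | left H => Some (projT1 (cid H)) | right _ => None end.
exists (pmap h (enum T)).
apply: seteqE => w; split.
- case=> u Uu Hw.
  have Hex : exists u', U u' /\ g u' = g u by exists u.
  have [u' Hu'] : exists u', h (g u) = Some u' /\ g u' = g u.
    rewrite /h; case: pselect => [H|//]; exists (projT1 (cid H)); split=> //.
    by case: (cid H) => x [].
  exists u'.
    by rewrite /= mem_pmap; apply/mapP; exists (g u); rewrite ?mem_enum // (proj1 Hu').
  by rewrite (Hg _ _ (proj2 Hu')).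
- case=> u; rewrite /= mem_pmap => /mapP [t _]; rewrite /h.
  case: pselect => [H|//] [->] Hw; exists (projT1 (cid H)) => //.
  by case: (cid H) => x [].
Qed.

Lemma finq_L (L : set word) : regular L -> finq L.
Proof.
move=> [Q [d [q0 [F HF]]]]; exists Q, (foldl d q0) => u u' E.
apply: seteqE => w; rewrite /lquot /= !HF !foldl_cat E; done.
Qed.

Lemma finq_rL (L : set word) : regular L -> finq (rlang L).
Proof.
move=> [Q [d [q0 [F HF]]]].
exists {ffun Q -> bool}, (fun v => [ffun q => `[< F (foldl d q (rev v)) >]]).
move=> v v' E; apply: seteqE => w; rewrite !lquot_rev !HF !foldl_cat.
have := congr1 (fun f : {ffun Q -> bool} => f (foldl d q0 (rev w))) E; rewrite /= !ffunE.
exact: asbool_eq_equiv.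
Qed.

Lemma LQ_lquot (M : set word) u : LQ M (lquot u M).
Proof.
exists [:: u]; apply: seteqE => w; split.
- by move=> H; exists u; rewrite /= ?mem_seq1.
- by case=> u'; rewrite /= mem_seq1 => /eqP ->.
Qed.

Lemma DR_iff (L : set word) u v :
  DR L (lquot u L) (lquot v (rlang L)) <-> L (u ++ rev v).
Proof.
split; last by move=> H; exists u, v.
case=> u' [v' [E1 E2 H]].
have H1 : lquot u L (rev v') by rewrite E1.
have H2 : lquot v' (rlang L) (rev u) by rewrite lquot_rev revK.
by move: H2; rewrite -E2 lquot_rev revK.
Qed.

Lemma phi_bigcup (L : set word) (U : set word) (X : set (set word)) :
  (forall x, X x <-> exists2 u, U u & x = lquot u L) ->
  phi L (\bigcup_(u in U) lquot u L) = DRimg L X.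
Proof.
move=> HX; apply: seteqE => y; split.
- case=> v [u Uu Hu] ->; exists (lquot u L); first by apply/HX; exists u.
  by apply/DR_iff.
- case=> x /HX [u Uu ->] [u' [v [E1 -> H]]].
  exists v => //; exists u => //.
  have : lquot u' L (rev v) by [].
  by rewrite -E1.
Qed.

Lemma phi_sub (L : set word) (K1 : set word) (U2 : set word) :
  phi L K1 `<=` phi L (\bigcup_(u in U2) lquot u L) ->
  K1 `<=` \bigcup_(u in U2) lquot u L.
Proof.
move=> H w Kw.
have : phi L K1 (lquot (rev w) (rlang L)) by exists (rev w); rewrite // /rlang /= revK.
move/H => [v' [u Uu Hu] E].
exists u => //.
have : lquot v' (rlang L) (rev u) by rewrite lquot_rev revK.
by rewrite -E lquot_rev !revK.
Qed.

Lemma sub_dr (L : set word) (V : set word) u :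
  lquot u L `<=` dr L (\bigcup_(v in V) lquot v (rlang L)) <->
  ~ (\bigcup_(v in V) lquot v (rlang L)) (rev u).
Proof.
split; last by move=> H w Hw; exists u.
move=> H [v Vv Hv].
have : lquot u L (rev v) by move: Hv; rewrite lquot_rev revK.
move/H => [u' Hu' Hw]; apply: Hu'.
by exists v => //; rewrite lquot_rev revK.
Qed.

Lemma dr_anti (L : set word) K1 K2 : K2 `<=` K1 -> dr L K1 `<=` dr L K2.
Proof. by move=> H w [u Hu Hw]; exists u => // /H. Qed.

Lemma dr_ord (L : set word) (V1 V2 : set word) :
  let K1 := \bigcup_(v in V1) lquot v (rlang L) in
  let K2 := \bigcup_(v in V2) lquot v (rlang L) in
  dr L K1 `<=` dr L K2 <-> K2 `<=` K1.
Proof.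
move=> K1 K2; split; last exact: dr_anti.
move=> H w K2w; apply: contrapT => nK1w.
have : lquot (rev w) L `<=` dr L K1.
  by move=> x Hx; exists (rev w); rewrite // /rlang /= revK.
move=> H1; have := subset_trans H1 H; rewrite /K2 sub_dr revK; exact.
Qed.

Lemma dr_dr (L : set word) (U : set word) :
  dr L (dr (rlang L) (\bigcup_(u in U) lquot u L)) = \bigcup_(u in U) lquot u L.
Proof.
apply: seteqE => w; split.
- case=> u Hu Hw; apply: contrapT => nM; apply: Hu.
  exists (rev w); first by rewrite /rlang /= revK.
  by rewrite /rlang /= rev_cat !revK.
- case=> u Uu Hw; exists u => //.
  case=> v nM; rewrite /rlang /= rev_cat revK => H; apply: nM.
  by exists u.
Qed.

End Main.
Arguments finq {S} M.

Unset Implicit Arguments.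
Section Abs.
Variable T : Type.
Variables (P1 P2 : set (set T)) (f g : set T -> set T).
Hypothesis Hf : forall K, P1 K -> P2 (f K).
Hypothesis Hg : forall M, P2 M -> P1 (g M).
Hypothesis Hfg : forall M, P2 M -> f (g M) = M.
Hypothesis Hord : forall K1 K2, P1 K1 -> P1 K2 -> (f K1 `<=` f K2 <-> K2 `<=` K1).

Lemma f_inj K1 K2 : P1 K1 -> P1 K2 -> f K1 = f K2 -> K1 = K2.
Proof.
move=> P1K1 P1K2 E; apply/seteqP; split.
- by apply (Hord _ _ P1K2 P1K1); rewrite E.
- by apply (Hord _ _ P1K1 P1K2); rewrite E.
Qed.

Lemma gf K : P1 K -> g (f K) = K.
Proof. by move=> PK; apply: f_inj => //; [apply/Hg/Hf | rewrite Hfg //; apply: Hf]. Qed.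

Lemma JI_MI k : JI P1 k -> MI P2 (f k).
Proof.
move=> [Pk Hk]; split; first exact: Hf.
move=> s Hs [Pfk Hlow Hgreat].
have : List.In k (map g s).
  apply: Hk.
  - by move=> x /List.in_map_iff [m [<- /Hs /Hg]].
  - split => //.
    + move=> x /List.in_map_iff [m [<- Hm]].
      apply (Hord _ _ Pk (Hg _ (Hs _ Hm))); rewrite Hfg; [exact: Hlow | exact: Hs].
    + move=> z Pz Hz; apply (Hord _ _ Pz Pk); apply: Hgreat; first exact: Hf.
      move=> m Hm; rewrite -(Hfg _ (Hs _ Hm)); apply (Hord _ _ Pz (Hg _ (Hs _ Hm))).
      by apply: Hz; apply/List.in_map_iff; exists m.
move/List.in_map_iff => [m [Em Hm]]; by rewrite -Em Hfg //; apply: Hs.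
Qed.

Lemma MI_JI m : MI P2 m -> JI P1 (g m).
Proof.
move=> [Pm Hm]; split; first exact: Hg.
move=> t Ht [Pgm Hup Hleast].
have : List.In m (map f t).
  apply: Hm.
  - by move=> x /List.in_map_iff [y [<- /Ht /Hf]].
  - split => //.
    + move=> x /List.in_map_iff [y [<- Hy]].
      rewrite -(Hfg _ Pm); apply (Hord _ _ Pgm (Ht _ Hy)); exact: Hup.
    + move=> z Pz Hz; rewrite -(Hfg _ Pz) -(Hfg _ Pm).
      apply (Hord _ _ (Hg _ Pz) Pgm); apply: Hleast; first exact: Hg.
      move=> y Hy; apply (Hord _ _ (Hg _ Pz) (Ht _ Hy)); rewrite Hfg //.
      by apply: Hz; apply/List.in_map_iff; exists y.
move/List.in_map_iff => [y [Ey Hy]]; by rewrite -Ey gf //; apply: Ht.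
Qed.
End Abs.
Set Implicit Arguments.

Lemma JI_LW (S : finType) (M : set (seq S)) j : JI (LQ M) j -> exists u, j = lquot u M.
Proof.
move=> [[s Hs] H].
have : List.In j (map (fun u => lquot u M) s).
  apply: H.
  - by move=> x /List.in_map_iff [u [<- _]]; apply: LQ_lquot.
  - split; first by exists s.
    + move=> x /List.in_map_iff [u [<- /In_mem Hu]] w Hw; rewrite Hs; by exists u.
    + move=> z _ Hz w; rewrite Hs => -[u /= Hu Hw]; apply: (Hz (lquot u M)) => //.
      by apply/List.in_map_iff; exists u; split => //; apply/In_mem.
by move/List.in_map_iff => [u [<- _]]; exists u.
Qed.

Lemma dr_LQ (S : finType) (L : set (seq S)) K : finq L -> LQ L (dr L K).
Proof. move=> fL; exact: (LQ_union fL (~` rlang K)). Qed.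

Lemma part2 (S : finType) (L : set (seq S)) (u v : seq S) :
  DR L (lquot u L) (lquot v (rlang L)) <->
  ~ (lquot u L `<=` dr L (lquot v (rlang L))).
Proof.
rewrite DR_iff; have := sub_dr L [set v] u; rewrite bigcup_set1 => Hsd.
split.
- by move=> H /Hsd; apply; rewrite lquot_rev revK.
- move=> H; apply: contrapT => nL; apply: H; apply/Hsd.
  by rewrite lquot_rev revK.
Qed.

Theorem theorem3p11 (S : finType) (L : set (seq S)) (HL : regular L) :
  ((forall K, LQ L K -> exists2 X, X `<=` LW L & phi L K = DRimg L X) /\
   [/\ (forall X Y, X `<=` LW L -> Y `<=` LW L ->
         exists2 Z, Z `<=` LW L & DRimg L X `|` DRimg L Y = DRimg L Z),
      (forall K1 K2, LQ L K1 -> LQ L K2 -> phi L K1 = phi L K2 -> K1 = K2),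
      (forall X, X `<=` LW L -> exists2 K, LQ L K & phi L K = DRimg L X),
      (forall K1 K2, LQ L K1 -> LQ L K2 -> phi L (K1 `|` K2) = phi L K1 `|` phi L K2)
    & phi L set0 = set0]) /\
  (forall u v : seq S,
     DR L (lquot u L) (lquot v (rlang L)) <->
     ~ (lquot u L `<=` dr L (lquot v (rlang L)))) /\
  [/\ (forall k, JI (LQ (rlang L)) k -> MI (LQ L) (dr L k)),
      (forall k1 k2, JI (LQ (rlang L)) k1 -> JI (LQ (rlang L)) k2 ->
         dr L k1 = dr L k2 -> k1 = k2),
      (forall m, MI (LQ L) m -> exists2 k, JI (LQ (rlang L)) k & dr L k = m)
    & (forall j k, JI (LQ L) j -> JI (LQ (rlang L)) k ->
         (RDR L j k <-> ~ (j `<=` dr L k)))].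
Proof.
have fL := finq_L HL; have frL := finq_rL HL.
split; [split; [|split]|split; first exact: part2].
- move=> K [s ->].
  exists [set x | exists2 u, [set` s] u & x = lquot u L].
    by move=> x [u _ ->]; exists u.
  by apply: phi_bigcup.
- move=> X Y HX HY; exists (X `|` Y); first by move=> x [/HX|/HY].
  apply: seteqE => y; split.
  + by case=> -[x Xx D]; exists x => //; [left|right].
  + by case=> x [Xx|Yx] D; [left|right]; exists x.
- move=> K1 K2 [s1 ->] [s2 ->] E; apply/seteqP; split; apply: phi_sub.
  + by rewrite E.
  + by rewrite E.
- move=> X HX; exists (\bigcup_(u in [set u | X (lquot u L)]) lquot u L).
    exact: LQ_union.
  apply: phi_bigcup => x; split.
  + by move=> Xx; have [u Eu] := HX _ Xx; exists u; rewrite /= -?Eu.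
  + by case=> u Hu ->.
- move=> K1 K2 _ _; apply: seteqE => y; split.
  + by case=> v [H|H] ->; [left|right]; exists v.
  + by case=> -[v H ->]; exists v => //; [left|right].
- by apply: seteqE => y; split => // -[v []].
have Hf : forall K, LQ (rlang L) K -> LQ L (dr L K) by move=> K _; exact: dr_LQ.
have Hg : forall M, LQ L M -> LQ (rlang L) (dr (rlang L) M)
  by move=> M _; exact: dr_LQ.
have Hfg : forall M, LQ L M -> dr L (dr (rlang L) M) = M
  by move=> M [s ->]; exact: dr_dr.
have Hord : forall K1 K2, LQ (rlang L) K1 -> LQ (rlang L) K2 ->
    (dr L K1 `<=` dr L K2 <-> K2 `<=` K1)
  by move=> K1 K2 [s1 ->] [s2 ->]; exact: dr_ord.
split.
- exact: (JI_MI _ _ _ _ _ Hf Hg Hfg Hord).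
- move=> k1 k2 [P1 _] [P2 _]; exact: (f_inj _ _ _ Hord).
- move=> m Hm; exists (dr (rlang L) m); first exact: (MI_JI _ _ _ _ _ Hf Hg Hfg Hord).
  by apply: Hfg; case: Hm.
- move=> j k Hj Hk; have [u Eu] := JI_LW Hj; have [v Ev] := JI_LW Hk.
  subst j k; split; first by case=> /part2.
  by move=> /part2 H; split.
Qed.
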